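(* Let $\mathbf C$ be a category of coframes and $(L,\lim_L)$ a convergence $\mathbf C$-object. Then $\lim_{T(L)}$, defined by $\lim_{T(L)}\mathcal F=\bigwedge\{c: c\in\mathcal F^\#\cap C(L)\}$, is the finest topological convergence structure on $L$ that is coarser than $\lim_L$: it is topological, $\lim_L\mathcal F\le\lim_{T(L)}\mathcal F$ for all $\mathcal F$, and every topological convergence structure $\lim$ on $L$ with $\lim_L\le\lim$ pointwise satisfies $\lim_{T(L)}\le\lim$ pointwise.
   Context: A category of coframes has coframes as objects and coframe morphisms. A filter on $L$ is a non-empty upward-closed subset closed under binary meets ($L$ allowed); $\mathbb F L$ is the set of filters. A convergence structure on $L$ is a monotone map $\lim:\mathbb F L\to L$; a convergence $\mathbf C$-object is a $\mathbf C$-object with a convergence structure. For $\mathcal A\subseteq L$, $\mathcal A^\#=\{\ell: a\wedge\ell\ne\bot\ \forall a\in\mathcal A\}$. For a convergence structure $\lim$, an element $c$ is closed if it is complemented and $\lim\mathcal F\le c$ for every filter $\mathcal F$ with $c\in\mathcal F^\#$; $C(\lim)$ (written $C(L)$ for $\lim_L$) is the set of closed elements. A convergence structure $\lim$ is topological if $\lim\mathcal F=\bigwedge\{c:c\in\mathcal F^\#\cap C(\lim)\}$ for every filter $\mathcal F$. Convergence structures are ordered pointwise; $\lim\le\lim'$ means $\lim$ is finer (and $\lim'$ coarser). *)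

(* Defs.v *)
Set Implicit Arguments.


Record coframe := Coframe {
  car :> Type;
  le : car -> car -> Prop;
  bot : car;
  top : car;
  meet : car -> car -> car;
  join : car -> car -> car;
  Meet : (car -> Prop) -> car;
  le_refl : forall x, le x x;
  le_trans : forall x y z, le x y -> le y z -> le x z;
  le_antisym : forall x y, le x y -> le y x -> x = y;
  bot_le : forall x, le bot x;
  le_top : forall x, le x top;
  meet_glb : forall x y z, le z (meet x y) <-> (le z x /\ le z y);
  join_lub : forall x y z, le (join x y) z <-> (le x z /\ le y z);
  Meet_glb : forall (S : car -> Prop) z,
      le z (Meet S) <-> (forall s, S s -> le z s);
  join_Meet_distr : forall (a : car) (S : car -> Prop),
      join a (Meet S) = Meet (fun x => exists s, S s /\ x = join a s)
}.

Arguments le {c}.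
Arguments bot {c}.
Arguments top {c}.
Arguments meet {c}.
Arguments join {c}.
Arguments Meet {c}.

Section Defs.
Variable L : coframe.

(* Filter: non-empty, upward closed, closed under binary meets (L allowed). *)
Definition is_filter (F : L -> Prop) : Prop :=
  (exists a, F a) /\
  (forall a b, F a -> le a b -> F b) /\
  (forall a b, F a -> F b -> F (meet a b)).

Definition filter := { F : L -> Prop | is_filter F }.
Definition fset (F : filter) : L -> Prop := proj1_sig F.

Definition is_convergence (lim : filter -> L) : Prop :=
  forall F G : filter, (forall a, fset F a -> fset G a) -> le (lim F) (lim G).

Definition sharp (A : L -> Prop) : L -> Prop :=
  fun l => forall a, A a -> meet a l <> bot.

Definition complemented (c : L) : Prop :=
  exists d, meet c d = bot /\ join c d = top.

Definition closed_el (lim : filter -> L) (c : L) : Prop :=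
  complemented c /\ (forall F : filter, sharp (fset F) c -> le (lim F) c).

Definition topological (lim : filter -> L) : Prop :=
  forall F : filter,
    lim F = Meet (fun c => sharp (fset F) c /\ closed_el lim c).

Definition limT (limL : filter -> L) : filter -> L :=
  fun F => Meet (fun c => sharp (fset F) c /\ closed_el limL c).

End Defs.

(* Main.v *)
Require Import Defs.

Lemma Meet_le (L : coframe) (S : L -> Prop) s : S s -> le (Meet S) s.
Proof. intro Hs. exact (proj1 (Meet_glb L S (Meet S)) (le_refl L _) s Hs). Qed.

Lemma Meet_mono (L : coframe) (S T : L -> Prop) :
  (forall c, S c -> T c) -> le (Meet T) (Meet S).
Proof.
  intro H. apply (proj2 (Meet_glb L S (Meet T))). intros s Hs.
  apply Meet_le. auto.
Qed.

Theorem mainTheorem18 (L : coframe) (limL : filter L -> L) :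
  is_convergence limL ->
  (is_convergence (limT limL) /\ topological (limT limL)) /\
  (forall F : filter L, le (limL F) (limT limL F)) /\
  (forall lim : filter L -> L,
      is_convergence lim -> topological lim ->
      (forall F : filter L, le (limL F) (lim F)) ->
      forall F : filter L, le (limT limL F) (lim F)).
Proof.
  intro Hc.
  assert (HLT : forall F : filter L, le (limL F) (limT limL F)).
  { intro F. unfold limT. apply (proj2 (Meet_glb L _ _)).
    intros c [Hs [_ Hcl]]. auto. }
  split; [split|split].
  - intros F G HFG. unfold limT. apply Meet_mono.
    intros c [Hs Hcl]. split; [|exact Hcl].
    intros a Ha. apply Hs. auto.
  - intro F. unfold limT at 1. apply le_antisym.
    + apply Meet_mono. intros c [Hs [Hcomp Hcl]]. split; [exact Hs|].
      split; [exact Hcomp|]. intros G HG.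
      eapply le_trans; [apply HLT| apply Hcl; exact HG].
    + apply Meet_mono. intros c [Hs [Hcomp Hcl]]. split; [exact Hs|].
      split; [exact Hcomp|]. intros G HG.
      unfold limT. apply Meet_le. split; [exact HG|]. split; [exact Hcomp|exact Hcl].
  - exact HLT.
  - intros lim _ Htop Hle F. rewrite (Htop F). unfold limT. apply Meet_mono.
    intros c [Hs [Hcomp Hcl]]. split; [exact Hs|]. split; [exact Hcomp|].
    intros G HG. eapply le_trans; [apply Hle| apply Hcl; exact HG].
Qed.
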